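(* Let $M$ be a real $n\times n$ matrix, $n\ge2$. If both $M$ and $M^{[2]}$ are $P_0$-matrices, then $M$ is positive semistable. If both $M$ and $M^{[2]}$ are $P$-matrices, then $M$ is positive stable.
   Context: A square real matrix is a $P$-matrix (resp. $P_0$-matrix) if all its principal minors are positive (resp. nonnegative). It is positive stable (resp. positive semistable) if all its eigenvalues have positive (resp. nonnegative) real part. For $M\in\mathbb{R}^{n\times n}$, $M^{[2]}$ is the second additive compound: the matrix of $u\wedge v\mapsto Mu\wedge v+u\wedge Mv$ on $\Lambda^2\mathbb{R}^n$ with respect to the lexicographically ordered basis $e_i\wedge e_j$ ($i<j$). *)

(* Defs.v *)
(* Real matrices are taken over an arbitrary real closed
   field R (the reals being the prime example); eigenvalues live in R[i]. *)
From HB Require Import structures.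
From mathcomp Require Import all_boot all_order all_algebra.
From mathcomp Require Import complex.
Set Implicit Arguments. Unset Strict Implicit. Unset Printing Implicit Defensive.
Import Order.TTheory GRing.Theory Num.Theory.
Local Open Scope ring_scope.

Section Defs.
Variable R : rcfType.

Definition principal_submx (n : nat) (M : 'M[R]_n) (S : {set 'I_n}) : 'M[R]_#|S| :=
  \matrix_(i < #|S|, j < #|S|) M (enum_val i) (enum_val j).

Definition principal_minor (n : nat) (M : 'M[R]_n) (S : {set 'I_n}) : R :=
  \det (principal_submx M S).

Definition P_matrix (n : nat) (M : 'M[R]_n) : Prop :=
  forall S : {set 'I_n}, S != set0 -> 0 < principal_minor M S.
Definition P0_matrix (n : nat) (M : 'M[R]_n) : Prop :=
  forall S : {set 'I_n}, S != set0 -> 0 <= principal_minor M S.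

Definition cmx (n : nat) (M : 'M[R]_n) : 'M[R[i]]_n := map_mx (fun x => x%:C%C) M.
Definition positive_stable (n : nat) (M : 'M[R]_n) : Prop :=
  forall l : R[i], eigenvalue (cmx M) l -> 0 < complex.Re l.
Definition positive_semistable (n : nat) (M : 'M[R]_n) : Prop :=
  forall l : R[i], eigenvalue (cmx M) l -> 0 <= complex.Re l.

(* Second additive compound.  Index set: pairs (i,j) with i<j; the product
   finType enumerates pairs lexicographically, so enum_val gives the
   lexicographically ordered basis e_i /\ e_j (i<j). *)
Definition wedge_idx (n : nat) : {set 'I_n * 'I_n} :=
  [set p : 'I_n * 'I_n | (p.1 < p.2)%N].

(* coordinate of u /\ v on e_i /\ e_j (i<j) *)
Definition wedge_coord (n : nat) (u v : 'cV[R]_n) (i j : 'I_n) : R :=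
  u i 0 * v j 0 - u j 0 * v i 0.

Definition basis_vec (n : nat) (k : 'I_n) : 'cV[R]_n := delta_mx k 0.

(* column (k,l) = coordinates of  M e_k /\ e_l + e_k /\ M e_l *)
Definition add_compound2 (n : nat) (M : 'M[R]_n) : 'M[R]_#|wedge_idx n| :=
  \matrix_(r < #|wedge_idx n|, c < #|wedge_idx n|)
    let: (i, j) := enum_val r in
    let: (k, l) := enum_val c in
    wedge_coord (M *m basis_vec k) (basis_vec l) i j
    + wedge_coord (basis_vec k) (M *m basis_vec l) i j.

End Defs.

(* Main.v *)
Require Import Defs.
From HB Require Import structures.
From mathcomp Require Import all_boot all_order all_algebra all_fingroup.
From mathcomp Require Import complex zify ring.
Import Order.TTheory GRing.Theory Num.Theory.
Local Open Scope ring_scope.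
Set Implicit Arguments. Unset Strict Implicit. Unset Printing Implicit Defensive.

Section Pad.
Variable R : rcfType.

Definition pad n (S : {set 'I_n}) (A : 'M[R]_n) : 'M[R]_n :=
  \matrix_(i, j) if (i \in S) && (j \in S) then A i j else (i == j)%:R.

Definition dm n (d : 'I_n -> R) : 'M[R]_n := \matrix_(i, j) if i == j then d i else 0.

Lemma det_cast n m1 m2 (e : (m1 + m2 = n)%N) (Z : 'M[R]_n) :
  \det (castmx (esym e, esym e) Z) = \det Z.
Proof. by case: n / e in Z *; rewrite castmx_id. Qed.

Lemma det_rowk n (k : 'I_n) (C C' : 'M[R]_n) :
  (forall j, C k j = (k == j)%:R) -> (forall j, C' k j = (k == j)%:R) ->
  (forall i j, i != k -> j != k -> C i j = C' i j) -> \det C = \det C'.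
Proof.
move=> hC hC' hCC.
rewrite (expand_det_row C k) (expand_det_row C' k).
rewrite (bigD1 k) //= big1 => [|j /negbTE hj]; last by rewrite hC eq_sym hj mul0r.
rewrite [RHS](bigD1 k) //= [X in _ = _ + X]big1 => [|j /negbTE hj]; last by rewrite hC' eq_sym hj mul0r.
rewrite hC hC' eqxx !mul1r !addr0 /cofactor; congr (_ * \det _).
apply/matrixP => i j; rewrite !mxE; by apply: hCC; rewrite eq_sym neq_lift.
Qed.


Lemma det_pad_split n (A : 'M[R]_n) (T : {set 'I_n}) d k : k \in T ->
  \det (pad T (A + dm d)) =
  \det (pad T (A + dm (fun i => if i == k then 0 else d i)))
  + d k * \det (pad (T :\ k) (A + dm d)).
Proof.
move=> kT.
set d0 := fun i => if i == k then 0 else d i.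
set B := pad T (A + dm d0).
set C := \matrix_(i, j) if i == k then (k == j)%:R else B i j.
have -> : \det (pad (T :\ k) (A + dm d)) = \det C.
  apply: (det_rowk (k:=k)) => [j|j|i j ik jk].
  - by rewrite !mxE in_setD1 eqxx.
  - by rewrite !mxE eqxx.
  rewrite !mxE (negbTE ik) !in_setD1 ik jk /= /d0 (negbTE ik).
  by case: ifP.
rewrite -[\det B]mul1r; apply: (determinant_multilinear (i0:=k)).
- apply/rowP => j; rewrite !mxE eqxx /d0 kT /= eqxx.
  case: (boolP (j \in T)) => jT /=.
    by case: (k =P j) => [<-|_]; rewrite ?mulr1 ?mulr0 ?addr0 ?mul1r ?add0r.
  have /negbTE -> : k != j by apply: contraNneq jT => <-.
  by rewrite -[false%:R]/(0:R) !mulr0 addr0.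
- apply/matrixP => i j; rewrite !mxE /d0.
  have hk : (lift k i == k) = false by apply/negbTE; rewrite eq_sym neq_lift.
  by rewrite !hk.
- apply/matrixP => i j; rewrite !mxE /d0.
  have hk : (lift k i == k) = false by apply/negbTE; rewrite eq_sym neq_lift.
  by rewrite !hk.
Qed.


Lemma pad_pos n (A : 'M[R]_n) (Q : pred R) :
  (forall x y, Q x -> 0 <= y -> Q (x + y)) -> (forall x, Q x -> 0 <= x) ->
  (forall S, Q (\det (pad S A))) ->
  forall T d, (forall i, 0 <= d i) -> Q (\det (pad T (A + dm d))).
Proof.
move=> hQ hQ0 hA.
suff H : forall m (T : {set 'I_n}) (d : 'I_n -> R), (#|T| + #|[set i in T | d i != 0%R]| < m)%N ->
    (forall i, 0 <= d i) -> Q (\det (pad T (A + dm d))).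
  by move=> T d; apply: H (ltnSn _).
elim=> [|m IH] T d //= hm hd.
case: (pickP [pred i | (i \in T) && (d i != 0)]) => [k /andP [kT dk] | hnone].
  rewrite (det_pad_split _ _ kT).
  have c1 : #|T| = (#|T :\ k|).+1 by rewrite (cardsD1 k T) kT.
  have c2 : #|[set i in T | d i != 0%R]| =
            (#|[set i in T | (if i == k then 0 else d i) != 0%R]|).+1.
    rewrite (cardsD1 k) inE kT dk /=; congr (_.+1); apply: eq_card => i.
    by rewrite !inE; case: (i =P k) => [->|]; rewrite ?eqxx ?andbF //= andbC.
  have c3 : (#|[set i in T :\ k | d i != 0%R]| <= #|[set i in T | d i != 0%R]|)%N.
    apply: subset_leq_card; apply/subsetP => i; rewrite !inE.
    by case/andP => /andP [_ ->] ->.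
  move: c1 c2 c3 hm.
  set a := #|T|; set b := #|T :\ k|; set c := #|[set i in T | d i != 0%R]|.
  set e := #|[set i in T | (if i == k then 0 else d i) != 0%R]|.
  set f := #|[set i in T :\ k | d i != 0%R]| => c1 c2 c3 hm.
  apply: hQ.
    apply: IH => [|i]; first by change (a + e < m)%N; lia.
    by case: (i == k) => //; rewrite lexx.
  apply: mulr_ge0 (hd k) _; apply: hQ0; apply: IH hd; change (b + f < m)%N; lia.
have -> : pad T (A + dm d) = pad T A.
  apply/matrixP => i j; rewrite !mxE.
  case: (boolP (i \in T)) => iT //=; case: (boolP (j \in T)) => jT //=.
  case: (i =P j) => [<-|]; rewrite ?addr0 //.
  by move: (hnone i); rewrite /= iT /= => /negbFE/eqP ->; rewrite addr0.
exact: hA.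
Qed.


Lemma det_pad_minor n (A : 'M[R]_n) (S : {set 'I_n}) :
  \det (pad S A) = principal_minor A S.
Proof.
set k := #|S|.
set s := enum S ++ enum (~: S).
have szS : size (enum S) = k by rewrite -cardE.
have szC : size (enum (~: S)) = (n - k)%N.
  by rewrite -cardE [k]cardsCs card_ord subKn // -[X in (_ <= X)%N](card_ord n) max_card.
have kn : (k <= n)%N by rewrite -[X in (_ <= X)%N](card_ord n) max_card.
have hs : perm_eq s (ord_tuple n).
  apply: uniq_perm => [|/=|i]; rewrite ?enum_uniq //.
    rewrite cat_uniq !enum_uniq /= andbT; apply/hasPn => i.
    by rewrite !mem_enum !inE => ->.
  by rewrite /= mem_cat !mem_enum inE orbN.
case/tuple_permP: hs => p hp.
have hpv : forall i : 'I_n, p i = nth i s i.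
  move=> i; rewrite hp /= -(tnth_nth i (mktuple _)) tnth_mktuple.
  by rewrite (tnth_nth i) /= nth_ord_enum.
have hin : forall i : 'I_n, (p i \in S) = (i < k)%N.
  move=> i; rewrite hpv nth_cat szS; case: ifP => hik.
    by rewrite -mem_enum mem_nth // szS.
  have : nth i (enum (~: S)) (i - k) \in enum (~: S).
    by apply: mem_nth; rewrite szC; move: (ltn_ord i) hik; lia.
  by rewrite mem_enum inE => /negbTE.
have hul : forall i : 'I_n, (i < k)%N -> p i = nth i (enum S) i.
  by move=> i hik; rewrite hpv nth_cat szS hik.
have -> : \det (pad S A) = \det (row_perm p (col_perm p (pad S A))).
  rewrite row_permE col_permE !det_mulmx !det_perm odd_permV.
  by rewrite mulrCA -signr_addb addbb expr0 mulr1.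
have e : (k + (n - k))%N = n by rewrite subnKC.
rewrite -(det_cast e) -[castmx _ _]submxK.
have -> : drsubmx (castmx (esym e, esym e) (row_perm p (col_perm p (pad S A)))) = 1%:M.
  apply/matrixP => i j; rewrite !mxE !castmxE !mxE /= !hin /= !ltnNge !leq_addr /=.
  rewrite (inj_eq perm_inj) -val_eqE /= eqn_add2l.
  by rewrite -val_eqE.
have -> : ursubmx (castmx (esym e, esym e) (row_perm p (col_perm p (pad S A)))) = 0.
  apply/matrixP => i j; rewrite !mxE !castmxE !mxE /= !hin /= ltn_ord ltnNge leq_addr /=.
  apply/eqP; rewrite pnatr_eq0 eqb0; apply/eqP => h.
  by move: (hin (cast_ord (esym (esym e)) (lshift (n - k) i))); rewrite h hin /= ltn_ord ltnNge leq_addr.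
rewrite det_lblock det1 mulr1 /principal_minor; congr (\det _).
apply/matrixP => i j; rewrite !mxE !castmxE !mxE /= !hin /= !ltn_ord /=.
by rewrite !hul //= (enum_val_nth (cast_ord (esym (esym e)) (lshift (n - k) i)) i) (enum_val_nth (cast_ord (esym (esym e)) (lshift (n - k) j)) j).
Qed.


Lemma pad_setT n (X : 'M[R]_n) : pad setT X = X.
Proof. by apply/matrixP => i j; rewrite !mxE !inE. Qed.

Lemma pad_set0 n (X : 'M[R]_n) : pad set0 X = 1%:M.
Proof. by apply/matrixP => i j; rewrite !mxE !inE. Qed.

Lemma dm_const n t : dm (fun _ : 'I_n => t) = t%:M.
Proof. by apply/matrixP => i j; rewrite !mxE; case: (i == j). Qed.

Lemma pad_pos_strict n (A : 'M[R]_n) :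
  (forall S, 0 <= \det (pad S A)) ->
  forall T d, (forall i, 0 < d i) -> 0 < \det (pad T (A + dm d)).
Proof.
move=> hA.
suff H : forall m (T : {set 'I_n}) (d : 'I_n -> R), (#|T| < m)%N ->
    (forall i, 0 < d i) -> 0 < \det (pad T (A + dm d)).
  by move=> T d; apply: H (ltnSn _).
elim=> [|m IH] T d //= hm hd.
case: (pickP [pred i | i \in T]) => [k /= kT | hnone].
  rewrite (det_pad_split _ _ kT); apply: ltr_wpDl.
    apply: (pad_pos (Q := fun x => 0 <= x)) => // [x y|i].
      exact: addr_ge0.
    by case: (i == k); rewrite ?lexx // ltW.
  apply: mulr_gt0 (hd k) _; apply: IH hd.
  by move: hm; rewrite (cardsD1 k T) kT.
have -> : T = set0 by apply/setP => i; rewrite inE; exact: hnone.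
by rewrite pad_set0 det1 ltr01.
Qed.

Lemma detpos_P0 n (A : 'M[R]_n) t : P0_matrix A -> 0 < t -> 0 < \det (A + t%:M).
Proof.
move=> hA ht; rewrite -dm_const -[A + _]pad_setT; apply: pad_pos_strict => // S.
case: (S =P set0) => [->|/eqP hS]; first by rewrite pad_set0 det1 ler01.
by rewrite det_pad_minor; apply: hA.
Qed.

Lemma detpos_P n (A : 'M[R]_n) t : P_matrix A -> 0 <= t -> 0 < \det (A + t%:M).
Proof.
move=> hA ht; rewrite -dm_const -[A + _]pad_setT.
apply: (pad_pos (Q := fun x => 0 < x)) => // [x y hx hy|x /ltW //|S].
  exact: ltr_wpDr.
case: (S =P set0) => [->|/eqP hS]; first by rewrite pad_set0 det1 ltr01.
by rewrite det_pad_minor; apply: hA.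
Qed.

Local Notation C := R[i].

Lemma cmxE n (A : 'M[R]_n) : cmx A = map_mx (real_complex R) A.
Proof. by []. Qed.

Lemma real_eig n (A : 'M[R]_n) (r : R) :
  eigenvalue (cmx A) (r%:C)%C -> \det (A - r%:M) = 0.
Proof.
case/eigenvalueP => v hv vnz; apply/eqP; apply: contraNT vnz => hdet.
set B := cmx (A - r%:M).
have hB : B \in unitmx.
  rewrite unitmxE unitfE /B cmxE det_map_mx.
  by apply: contra hdet => /eqP [->].
have hvB : v *m B = 0.
  rewrite /B cmxE map_mxB map_scalar_mx -cmxE mulmxBr hv mul_mx_scalar subrr //.
by rewrite -(mulmxK hB v) hvB mul0mx.
Qed.

Lemma sum_prod (I : finType) (f g : I -> C) :
  \sum_i \sum_j f i * g j = (\sum_i f i) * (\sum_j g j).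
Proof. by rewrite mulr_suml; apply: eq_bigr => i _; rewrite mulr_sumr. Qed.

Lemma lagrange n (a b x y : 'I_n -> C) :
  \sum_(p : 'I_n * 'I_n | (p.1 < p.2)%N)
     (a p.1 * b p.2 - a p.2 * b p.1) * (x p.1 * y p.2 - x p.2 * y p.1) =
  (\sum_i a i * x i) * (\sum_j b j * y j) - (\sum_i a i * y i) * (\sum_j b j * x j).
Proof.
set G := fun i j => (a i * b j - a j * b i) * (x i * y j - x j * y i).
have Gs : forall i j, G i j = G j i by move=> i j; rewrite /G; ring.
have full : \sum_i \sum_j G i j = 2%:R * ((\sum_i a i * x i) * (\sum_j b j * y j)
     - (\sum_i a i * y i) * (\sum_j b j * x j)).
  have -> : \sum_i \sum_j G i j = \sum_i \sum_j ((a i * x i) * (b j * y j)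
       - (a i * y i) * (b j * x j) - (b i * x i) * (a j * y j) + (b i * y i) * (a j * x j)).
    by apply: eq_bigr => i _; apply: eq_bigr => j _; rewrite /G; ring.
  rewrite (eq_bigr (fun i => \sum_j ((a i * x i) * (b j * y j)) - \sum_j ((a i * y i) * (b j * x j))
     - \sum_j ((b i * x i) * (a j * y j)) + \sum_j ((b i * y i) * (a j * x j)))); last first.
    by move=> i _; rewrite !(sumrB, big_split).
  rewrite !(sumrB, big_split) /= !sum_prod; ring.
have split : \sum_i \sum_j G i j = 2%:R * \sum_(p : 'I_n * 'I_n | (p.1 < p.2)%N) G p.1 p.2.
  rewrite pair_big /= (bigID (fun p : 'I_n * 'I_n => (p.1 < p.2)%N)) /=.
  rewrite [X in _ + X](bigID (fun p : 'I_n * 'I_n => (p.2 < p.1)%N)) /=.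
  rewrite [X in _ + (_ + X)]big1 ?addr0; last first.
    move=> [i j] /= /andP [hij hji]; have -> : i = j.
      by apply/val_inj; move: hij hji; rewrite -!leqNgt /=; lia.
    by rewrite /G subrr mul0r.
  rewrite [X in _ + X](reindex_inj (h := fun p : 'I_n * 'I_n => (p.2, p.1))) /=; last first.
    by move=> [i j] [k l] /= [-> ->].
  rewrite mulr_natl mulr2n; congr (_ + _); apply: eq_big => [[i j]|[i j] _] /=.
    by case: ltngtP.
  exact: Gs.
apply: (mulfI (x := 2%:R)); first by rewrite pnatr_eq0.
by rewrite -split full.
Qed.


Lemma colE n (M : 'M[R]_n) k i : (M *m basis_vec R k) i 0 = M i k.
Proof.
rewrite /basis_vec mxE (bigD1 k) //= big1 => [|j /negbTE hj]; last by rewrite mxE hj mulr0.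
by rewrite mxE !eqxx mulr1 addr0.
Qed.

Lemma bvE n (k : 'I_n) i : basis_vec R k i 0 = (i == k)%:R.
Proof. by rewrite /basis_vec mxE eqxx andbT. Qed.

Lemma sum_delta n (f : 'I_n -> C) l : \sum_i f i * (i == l)%:R = f l.
Proof.
rewrite (bigD1 l) //= big1 => [|j /negbTE hj]; last by rewrite hj mulr0.
by rewrite eqxx mulr1 addr0.
Qed.

Lemma key n (M : 'M[R]_n) (lam : C) :
  eigenvalue (cmx M) lam -> complex.Im lam != 0 ->
  eigenvalue (cmx (add_compound2 M)) ((2%:R * complex.Re lam)%:C)%C.
Proof.
case/eigenvalueP => v hv vnz hIm.
set u := fun i => v 0 i.
set ub := fun i => conjc (v 0 i).
have E1 : forall k, \sum_i u i * ((M i k)%:C)%C = lam * u k.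
  move=> k; have := congr1 (fun X : 'rV[C]_n => X 0 k) hv; rewrite !mxE => <-.
  by apply: eq_bigr => i _; rewrite mxE.
have E2 : forall k, \sum_i ub i * ((M i k)%:C)%C = conjc lam * ub k.
  move=> k; rewrite -rmorphM -E1 rmorph_sum; apply: eq_bigr => i _.
  by rewrite rmorphM; congr (_ * _); rewrite /= oppr0.
set w : 'rV[C]_#|wedge_idx n| := \row_r (u (enum_val r).1 * ub (enum_val r).2
                                          - u (enum_val r).2 * ub (enum_val r).1).
apply/eigenvalueP; exists w.
  apply/rowP => c; rewrite !mxE.
  under eq_bigr => r _ do rewrite !mxE.
  case: (enum_val c) => k l.
  pose x1 i := ((M i k)%:C)%C; pose y1 (j : 'I_n) := ((j == l)%:R : C).
  pose x2 (i : 'I_n) := ((i == k)%:R : C); pose y2 j := ((M j l)%:C)%C.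
  pose F (p : 'I_n * 'I_n) := (u p.1 * ub p.2 - u p.2 * ub p.1) *
     ((x1 p.1 * y1 p.2 - x1 p.2 * y1 p.1) + (x2 p.1 * y2 p.2 - x2 p.2 * y2 p.1)).
  rewrite (eq_bigr (fun r => F (enum_val r))); last first.
    move=> r _; rewrite /F; case: (enum_val r) => i j /=; congr (_ * _).
    rewrite /wedge_coord !colE !bvE /x1 /x2 /y1 /y2.
    by rewrite rmorphD !rmorphB !rmorphM !rmorph_nat.
  rewrite -big_enum_val /=.
  rewrite (eq_bigl (fun p : 'I_n * 'I_n => (p.1 < p.2)%N)); last by move=> p; rewrite inE.
  rewrite /F; under eq_bigr => p _ do rewrite mulrDr.
  rewrite big_split /= !lagrange.
  rewrite /x2 /y1 !sum_delta E1 E2 /x1 /y2 E1 E2.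
  by rewrite rmorphM rmorph_nat -addcJ; ring.
apply/eqP => w0.
have hsym : forall i j, u i * ub j = u j * ub i.
  have hlt : forall i j : 'I_n, (i < j)%N -> u i * ub j = u j * ub i.
    move=> i j hij.
    have Hij : (i, j) \in wedge_idx n by rewrite inE.
    have := congr1 (fun X : 'rV[C]_#|wedge_idx n| => X 0 (enum_rank_in Hij (i, j))) w0.
    by rewrite !mxE (enum_rankK_in Hij Hij) /= => /eqP; rewrite subr_eq0 => /eqP.
  move=> i j; case: (ltngtP i j) => h; first exact: hlt.
    by rewrite (hlt _ _ h).
  by have -> : i = j by apply/val_inj.
case: (pickP (fun k => u k != 0)) => [k hk | h0]; last first.
  move/eqP: vnz; apply; apply/rowP => j; rewrite mxE.
  by move: (h0 j) => /= /negbFE /eqP.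
have hkk : ub k * u k * (lam - conjc lam) = 0.
  have := congr1 (fun z => u k * z) (E2 k); rewrite mulr_sumr.
  rewrite (eq_bigr (fun i => ub k * (u i * ((M i k)%:C)%C))); last first.
    by move=> i _; rewrite !mulrA hsym; ring.
  rewrite -mulr_sumr E1 => h.
  have -> : ub k * u k * (lam - conjc lam) = ub k * (lam * u k) - u k * (conjc lam * ub k).
    by ring.
  by rewrite h subrr.
move/eqP: hkk; rewrite subcJ !mulf_eq0 /ub conjc_eq0.
rewrite /u in hk; rewrite (negbTE hk) /= pnatr_eq0 /= fmorph_eq0 (negbTE hIm) /=.
by rewrite eq_complex /= oner_eq0 andbF.
Qed.

End Pad.

Lemma scal_neg (R : rcfType) n (A : 'M[R]_n) r : A - r%:M = A + (-r)%:M.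
Proof. by apply/matrixP => i j; rewrite !mxE mulNrn. Qed.

Unset Implicit Arguments.

Theorem lemma2p5 (R : rcfType) (n : nat) (M : 'M[R]_n) (hn : (1 < n)%N) :
  (P0_matrix M -> P0_matrix (add_compound2 M) -> positive_semistable M) /\
  (P_matrix M -> P_matrix (add_compound2 M) -> positive_stable M).
Proof.
have reE : forall lam : R[i], complex.Im lam == 0 -> lam = ((complex.Re lam)%:C)%C.
  by case=> a b /= /eqP ->.
split.
- move=> hM hM2 lam hl; rewrite leNgt; apply/negP => hneg.
  case: (boolP (complex.Im lam == 0)) => him.
    move: hl; rewrite (reE _ him) => /real_eig; rewrite scal_neg => h.
    have ht : 0 < - complex.Re lam by rewrite oppr_gt0.
    by have := detpos_P0 hM ht; rewrite h ltxx.
  move: (key hl him) => /real_eig; rewrite scal_neg => h.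
  have ht : 0 < - (2%:R * complex.Re lam) by rewrite oppr_gt0 pmulr_rlt0 // ltr0n.
  by have := detpos_P0 hM2 ht; rewrite h ltxx.
- move=> hM hM2 lam hl; rewrite ltNge; apply/negP => hneg.
  case: (boolP (complex.Im lam == 0)) => him.
    move: hl; rewrite (reE _ him) => /real_eig; rewrite scal_neg => h.
    have ht : 0 <= - complex.Re lam by rewrite oppr_ge0.
    by have := detpos_P hM ht; rewrite h ltxx.
  move: (key hl him) => /real_eig; rewrite scal_neg => h.
  have ht : 0 <= - (2%:R * complex.Re lam) by rewrite oppr_ge0 pmulr_rle0 // ltr0n.
  by have := detpos_P hM2 ht; rewrite h ltxx.
Qed.
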